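(* Let $n\ge 1$ and $k\ge 3$ be integers and $p:=k-2$. Let $\{v_1,\dots,v_n\}$ be an orthonormal basis of $\mathbb{R}^n$ and $\lambda_r,\kappa_r\in\mathbb{R}$ for $r=1,\dots,n$, with $\kappa_r<0$ for all $r$. Let $\mathcal A=\sum_{r=1}^n\lambda_r v_r^{\otimes k}$, $K=\sum_{r=1}^n\kappa_r v_rv_r^\top$, and consider $\dot x=Kx+\mathcal A x^{k-1}$ on $\mathbb{R}^n$. Let $\mathcal I_+:=\{r:\lambda_r>0\}$ and $\mathcal I_-:=\{r:\lambda_r<0\}$. For $r\in\mathcal I_+$ let $c_r:=(-\kappa_r/\lambda_r)^{1/p}>0$, and, when $p$ is odd, for $r\in\mathcal I_-$ let $c_r:=-(\kappa_r/\lambda_r)^{1/p}<0$ (the real $p$-th root of $-\kappa_r/\lambda_r$). (i) If $p$ is even, let $\mathcal R_{\mathrm{even}}:=\{x_0\in\mathbb{R}^n: |v_r^\top x_0|<c_r\ \forall r\in\mathcal I_+\}$. Then for every $x(0)=x_0\in\mathcal R_{\mathrm{even}}$, the solution exists for all $t\ge 0$, satisfies $\lim_{t\to\infty}x(t)=0$, and $\mathcal R_{\mathrm{even}}$ is forward invariant. (ii) If $p$ is odd, let $\mathcal R_{\mathrm{odd}}:=\{x_0\in\mathbb{R}^n: v_r^\top x_0<c_r\ \forall r\in\mathcal I_+,\ v_r^\top x_0>c_r\ \forall r\in\mathcal I_-\}$. Then for every $x(0)=x_0\in\mathcal R_{\mathrm{odd}}$, the solution exists for all $t\ge 0$, satisfies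 $\lim_{t\to\infty}x(t)=0$, and $\mathcal R_{\mathrm{odd}}$ is forward invariant.
   Context: For $v\in\mathbb{R}^n$, $v^{\otimes k}$ is the $k$th-order tensor with entries $(v^{\otimes k})_{i_1\cdots i_k}=v_{i_1}\cdots v_{i_k}$. For a $k$th-order tensor $\mathcal A=(a_{i_1\cdots i_k})$ and $x\in\mathbb{R}^n$, $(\mathcal A x^{k-1})_i=\sum_{i_2,\dots,i_k=1}^n a_{i i_2\cdots i_k}x_{i_2}\cdots x_{i_k}$. *)

(* Defs.v *)
From HB Require Import structures.
From mathcomp Require Import all_boot all_order all_algebra.
From mathcomp Require Import all_classical all_reals all_analysis.
Set Implicit Arguments. Unset Strict Implicit. Unset Printing Implicit Defensive.
Import Order.TTheory GRing.Theory Num.Theory.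
Import numFieldNormedType.Exports.
Local Open Scope classical_set_scope.
Local Open Scope ring_scope.

Section Defs.
Variable R : realType.
Variables n k : nat.

Definition dotv (u x : 'cV[R]_n) : R := \sum_(i < n) u i 0 * x i 0.

Definition tensor := {ffun 'I_k -> 'I_n} -> R.

Definition tpow (v : 'cV[R]_n) : tensor :=
  fun idx => \prod_(j < k) v (idx j) 0.

(* (A x^{k-1})_i = sum_{i_2..i_k} a_{i i_2 .. i_k} x_{i_2} ... x_{i_k}:
   sum over multi-indices whose first entry (position 0) equals i,
   weighted by the product of x over the remaining positions. *)
Definition tapply (A : tensor) (x : 'cV[R]_n) : 'cV[R]_n :=
  \col_(i < n) \sum_(idx : {ffun 'I_k -> 'I_n}
                       | [forall j : 'I_k, (val j == 0%N) ==> (idx j == i)])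
      A idx * \prod_(j < k | val j != 0%N) x (idx j) 0.

Definition odeco_tensor (lam : 'I_n -> R) (v : 'I_n -> 'cV[R]_n) : tensor :=
  fun idx => \sum_(r < n) lam r * tpow (v r) idx.

Definition Kmat (kap : 'I_n -> R) (v : 'I_n -> 'cV[R]_n) : 'M[R]_n :=
  \sum_(r < n) kap r *: (v r *m (v r)^T).

Definition vfield (kap lam : 'I_n -> R) (v : 'I_n -> 'cV[R]_n)
  (x : 'cV[R]_n) : 'cV[R]_n :=
  Kmat kap v *m x + tapply (odeco_tensor lam v) x.

Definition global_solution (F : 'cV[R]_n -> 'cV[R]_n) (x0 : 'cV[R]_n)
  (x : R -> 'cV[R]_n) : Prop :=
  x 0 = x0 /\ {within `[0, +oo[%classic, continuous x} /\
  forall t : R, 0 < t -> is_derive t (1 : R) x (F (x t)).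

End Defs.

Definition cthr (R : realType) (p : nat) (kap lam : R) : R :=
  if 0 < lam then powR (- kap / lam) (p%:R^-1)
  else - powR (kap / lam) (p%:R^-1).

Definition Reven (R : realType) (n p : nat) (kap lam : 'I_n -> R)
  (v : 'I_n -> 'cV[R]_n) (x0 : 'cV[R]_n) : Prop :=
  forall r : 'I_n, 0 < lam r -> `|dotv (v r) x0| < cthr p (kap r) (lam r).

Definition Rodd (R : realType) (n p : nat) (kap lam : 'I_n -> R)
  (v : 'I_n -> 'cV[R]_n) (x0 : 'cV[R]_n) : Prop :=
  forall r : 'I_n,
    (0 < lam r -> dotv (v r) x0 < cthr p (kap r) (lam r)) /\
    (lam r < 0 -> cthr p (kap r) (lam r) < dotv (v r) x0).

(* For every x0 in S: the solution exists for all t >= 0, and every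
   (hence the unique) global solution from x0 tends to 0 and stays in S. *)
Definition stable_region (R : realType) (n : nat)
  (F : 'cV[R]_n -> 'cV[R]_n) (S : 'cV[R]_n -> Prop) : Prop :=
  forall x0, S x0 ->
    (exists x, global_solution F x0 x) /\
    (forall x, global_solution F x0 x ->
       (x t @[t --> +oo] --> (0 : 'cV[R]_n)) /\
       (forall t : R, 0 <= t -> S (x t))).

(* Main.v *)
Require Import Defs.
From HB Require Import structures.
From mathcomp Require Import all_boot all_order all_algebra.
From mathcomp Require Import all_classical all_reals all_analysis.
From mathcomp Require Import ring lra.
Set Implicit Arguments. Unset Strict Implicit. Unset Printing Implicit Defensive.
Import Order.TTheory GRing.Theory Num.Theory.
Import numFieldNormedType.Exports.
Local Open Scope classical_set_scope.
Local Open Scope ring_scope.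
Section S.
Context {R : realType}.
Definition cont_on (A : set R) (f : R -> R) :=
  forall s, A s -> forall e : R, 0 < e -> exists2 d : R, 0 < d &
    forall t, A t -> `|t - s| < d -> `|f t - f s| < e.

Lemma within_cont_on A f : {within A, continuous f} -> cont_on A f.
Proof.
move=> /subspace_continuousP cf s As e e0.
have /cvgrPdist_lt/(_ e e0) := cf s As.
rewrite /prop_near1 /within /= => /nbhs_ballP [d d0 H].
exists d => // t At tsd; rewrite distrC; apply: H => //.
by rewrite /ball /= distrC.
Qed.

Lemma cont_on_within A f : cont_on A f -> {within A, continuous f}.
Proof.
move=> cf; apply/subspace_continuousP => s As.
apply/cvgrPdist_lt => e e0.
have [d d0 H] := cf s As e e0.
rewrite /prop_near1 /within /=; apply/nbhs_ballP; exists d => //= t.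
rewrite /ball /= => st At; rewrite distrC; apply: H => //; by rewrite distrC.
Qed.

Lemma cont_on_sub A B f : A `<=` B -> cont_on B f -> cont_on A f.
Proof.
move=> AB cf s As e e0; have [d d0 H] := cf s (AB _ As) e e0.
by exists d => // t At; apply: H; apply: AB.
Qed.

Lemma last_le (g : R -> R) a b : a < b ->
  cont_on [set t | a <= t <= b] g -> g a <= 0 -> 0 < g b ->
  exists s, [/\ a <= s < b, g s <= 0 & forall t, s < t <= b -> 0 < g t].
Proof.
move=> ab cg ga gb.
set E := [set t | (a <= t <= b) /\ g t <= 0].
have Ea : E a by split => //; rewrite lexx ltW.
have hs : has_sup E.
  split; first by exists a.
  by exists b => t [/andP[_ ->]].
set s := sup E.
have as_ : a <= s by apply: sup_upper_bound.
have sb : s <= b by apply: ge_sup; [exists a | move=> t [/andP[_ ->]]].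
have gs : g s <= 0.
  rewrite leNgt; apply/negP => gs0.
  have [d d0 H] := cg s (ltac:(by rewrite /= as_ sb)) (g s) gs0.
  have [t Et st] := sup_adherent d0 hs.
  move: Et => /= -[/andP[at_ tb] gt]; rewrite -/s in st.
  have ts : t <= s by apply: (sup_upper_bound hs); split => //; rewrite at_ tb.
  have : `|g t - g s| < g s.
    by apply: H; [rewrite /= at_ tb | rewrite ler0_norm ?subr_le0 //; lra].
  rewrite ltr_norml; lra.
have gt0 : forall t, s < t <= b -> 0 < g t.
  move=> t /andP[st tb]; rewrite ltNge; apply/negP => gt.
  have : t <= s by apply: (sup_upper_bound hs); split => //; rewrite tb andbT; lra.
  lra.
exists s; split => //; rewrite as_ /= lt_neqAle sb andbT.
by apply/eqP => sbe; move: gb gs; rewrite -sbe; lra.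
Qed.

Lemma first_ge (g : R -> R) a b : a < b ->
  cont_on [set t | a <= t <= b] g -> g a < 0 -> 0 <= g b ->
  exists u, [/\ a < u <= b, 0 <= g u & forall t, a <= t < u -> g t < 0].
Proof.
move=> ab cg ga gb.
have := @last_le (fun t => - g (a + b - t)) a b ab.
case.
- move=> s /andP[as_ sb] e e0.
  have [d d0 H] := cg (a + b - s) (ltac:(apply/andP; split; lra)) e e0.
  exists d => // t /andP[at_ tb] ts.
  have := H (a + b - t) (ltac:(apply/andP; split; lra)).
  rewrite (_ : a + b - t - (a + b - s) = - (t - s)); last by ring.
  rewrite normrN => /(_ ts).
  by rewrite (_ : - g (a + b - t) - - g (a + b - s) = - (g (a + b - t) - g (a + b - s))) ?normrN //; ring.
- by rewrite (_ : a + b - a = b); [lra | ring].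
- by rewrite (_ : a + b - b = a); [lra | ring].
move=> s [/andP[as_ sb] gs H].
exists (a + b - s); split.
- apply/andP; split; lra.
- lra.
- move=> t /andP[at_ tu].
  have := H (a + b - t) (ltac:(apply/andP; split; lra)).
  by rewrite (_ : a + b - (a + b - t) = t); [lra | ring].
Qed.

Lemma mvt0 (f df : R -> R) (a b : R) : 0 <= a -> a < b ->
  cont_on [set t | 0 <= t] f -> (forall t : R, 0 < t -> is_derive t 1 f (df t)) ->
  exists2 c, a < c < b & f b - f a = df c * (b - a).
Proof.
move=> a0 ab cf df'.
have h1 : forall x, x \in `]a, b[ -> is_derive x 1 f (df x).
  move=> x; rewrite in_itv /= => /andP[ax xb]; apply: df'; lra.
have h2 : {within `[a, b], continuous f}.
  apply: cont_on_within; apply: cont_on_sub cf => x /=; rewrite in_itv /= => /andP[ax _]; lra.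
have [c] := @MVT R f df a b ab h1 h2.
by rewrite in_itv /= => cab ->; exists c.
Qed.

Lemma is_derive_comp1 (f g : R -> R) (x df dg : R) :
  is_derive x 1 f df -> is_derive (f x) 1 g dg -> is_derive x 1 (g \o f) (dg * df).
Proof.
move=> hf hg.
have d1 : derivable (g \o f) x 1.
  apply/derivable1_diffP; apply: differentiable_comp; apply/derivable1_diffP.
  - exact: (@ex_derive _ _ _ _ _ _ _ hf).
  - exact: (@ex_derive _ _ _ _ _ _ _ hg).
apply: DeriveDef => //.
rewrite -derive1E derive1_comp; [|exact: (@ex_derive _ _ _ _ _ _ _ hf)|exact: (@ex_derive _ _ _ _ _ _ _ hg)].
by rewrite !derive1E (@derive_val _ _ _ _ _ _ _ hf) (@derive_val _ _ _ _ _ _ _ hg).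
Qed.

End S.

Section Sc.
Context {R : realType}.
Implicit Types (kap lam b : R) (f : R -> R).

Definition ode_sol kap lam (p : nat) f :=
  cont_on [set t | 0 <= t] f /\
  forall t : R, 0 < t -> is_derive t 1 f (f t * (kap + lam * f t ^+ p)).

Lemma powR_root (a : R) (p : nat) : (0 < p)%N -> 0 <= a -> (a `^ (p%:R^-1)) ^+ p = a.
Proof.
move=> p0 a0; rewrite -powR_mulrn ?powR_ge0 // -powRrM mulVf ?powRr1 //.
by rewrite pnatr_eq0 -lt0n.
Qed.

Lemma cont_on_addc A f c : cont_on A f -> cont_on A (fun s => f s + c).
Proof.
move=> cf s As e e0; have [d d0 H] := cf s As e e0; exists d => // t At ts.
by rewrite (_ : f t + c - (f s + c) = f t - f s) ?H //; ring.
Qed.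

Lemma cont_on_opp A f : cont_on A f -> cont_on A (fun s => - f s).
Proof.
move=> cf s As e e0; have [d d0 H] := cf s As e e0; exists d => // t At ts.
by rewrite (_ : - f t - - f s = - (f t - f s)) ?normrN ?H //; ring.
Qed.

Lemma cont_onM A f (g : R -> R) : cont_on A f -> continuous g ->
  cont_on A (fun s => f s * g s).
Proof.
move=> cf cg; apply: within_cont_on; have cf' := cont_on_within cf.
move=> x; apply: continuousM; first exact: cf'.
exact: (continuous_subspaceT cg).
Qed.

Lemma y1_exists kap lam (p : nat) b : (0 < p)%N -> kap < 0 -> 0 <= b ->
  kap + lam * b ^+ p < 0 ->
  exists2 y1, b < y1 & forall z, 0 <= z < y1 -> kap + lam * z ^+ p < 0.
Proof.
move=> p0 k0 b0 hb.
case: (leP lam 0) => l0.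
  exists (b + 1); first lra.
  move=> z /andP[z0 _].
  have : lam * z ^+ p <= 0 by rewrite mulr_le0_ge0 // exprn_ge0.
  lra.
set y1 := (- kap / lam) `^ (p%:R^-1).
have q0 : 0 <= - kap / lam by rewrite divr_ge0 //; lra.
have y1p : y1 ^+ p = - kap / lam by apply: powR_root.
have y10 : 0 <= y1 by apply: powR_ge0.
have key : forall z, 0 <= z -> (lam * z ^+ p < - kap) = (z < y1).
  move=> z z0.
  rewrite -ltr_pdivlMl // mulrC -y1p.
  apply/idP/idP => h.
    rewrite ltNge; apply/negP => hz.
    have : y1 ^+ p <= z ^+ p by rewrite ler_pXn2r // ?inE.
    rewrite -/y1; lra.
  by rewrite ltrXn2r // -lt0n.
have lamk : lam^-1 * - kap = - kap / lam by rewrite mulrC.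
exists y1.
  rewrite -key //; lra.
move=> z /andP[z0 zy]; rewrite -key // in zy; lra.
Qed.


Lemma sol_upper kap lam (p : nat) f b : (0 < p)%N -> kap < 0 -> ode_sol kap lam p f ->
  0 <= b -> kap + lam * b ^+ p < 0 -> f 0 <= b -> forall t, 0 <= t -> f t <= b.
Proof.
move=> p0 k0 [cf df] b0 hb f0b t t0; rewrite leNgt; apply/negP => ft.
have tpos : 0 < t.
  rewrite lt_def t0 andbT; apply/eqP => e; rewrite e in ft; lra.
have [y1 by1 Hy1] := y1_exists p0 k0 b0 hb.
have [m [bm [mft my1]]] : exists m, b < m /\ m <= f t /\ m <= y1.
  by case: (leP (f t) y1) => h; [exists (f t) | exists y1]; lra.
set c := (b + m) / 2.
have cf0t : cont_on [set s | 0 <= s <= t] f.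
  by apply: cont_on_sub cf => s /andP[].
have [u [/andP[u0 ut] fu H1]] := @first_ge _ (fun s => f s + - c) 0 t tpos
  (cont_on_addc (- c) cf0t) (ltac:(rewrite /c /=; lra)) (ltac:(rewrite /c /=; lra)).
have cf0u : cont_on [set s | 0 <= s <= u] f.
  by apply: cont_on_sub cf => s /andP[].
have [s [/andP[s0 su] fs H2]] := @last_le _ (fun s => f s + - b) 0 u u0
  (cont_on_addc (- b) cf0u) (ltac:(rewrite /=; lra)) (ltac:(rewrite /c /= in fu *; lra)).
have [xi /andP[sxi xiu] E] := mvt0 s0 su cf df.
have fxib : b < f xi by have := H2 xi; rewrite sxi ltW //=; lra.
have fxic : f xi < c by have := H1 xi; rewrite xiu andbT; lra.
have hneg : kap + lam * f xi ^+ p < 0 by apply: Hy1; apply/andP; split; rewrite /c in fxic; lra.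
have : f xi * (kap + lam * f xi ^+ p) * (u - s) < 0.
  by rewrite pmulr_llt0 ?subr_gt0 // pmulr_rlt0 //; lra.
rewrite -E; rewrite /c in fu fs; lra.
Qed.


Lemma ode_sol_opp kap lam (p : nat) f : ode_sol kap lam p f ->
  ode_sol kap (lam * (-1) ^+ p) p (fun t => - f t).
Proof.
move=> [cf df]; split; first exact: cont_on_opp.
move=> t t0; have := is_deriveN (df t t0) => /= h.
apply: (@is_derive_eq _ _ _ _ _ _ _ _ h).
rewrite -mulrA -exprMn mulN1r opprK; ring.
Qed.


Lemma is_derive_expK (K r : R) : is_derive r 1 (fun r => expR (K * r)) (expR (K * r) * K).
Proof.
have hl : is_derive r 1 (fun r : R => K * r) K.
  have := is_deriveZ K (is_derive_id r 1) => h.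
  by apply: (@is_derive_eq _ _ _ _ _ _ _ _ h); rewrite /GRing.scale /= mulr1.
exact: (is_derive_comp1 hl (is_derive_expR _)).
Qed.

Lemma is_deriveM1 (f g : R -> R) (r df dg : R) : is_derive r 1 f df -> is_derive r 1 g dg ->
  is_derive r 1 (fun r => f r * g r) (f r * dg + g r * df).
Proof.
move=> hf hg; have := is_deriveM hf hg => h.
exact: (@is_derive_eq _ _ _ _ _ _ _ _ h).
Qed.

Lemma sol_pos kap lam (p : nat) f : (0 < p)%N -> kap < 0 -> ode_sol kap lam p f ->
  0 < f 0 -> kap + lam * f 0 ^+ p < 0 -> forall t, 0 <= t -> 0 < f t /\ f t <= f 0.
Proof.
move=> p0 k0 hs f00 hy0.
have up := sol_upper p0 k0 hs (ltW f00) hy0 (lexx _).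
move: hs => [cf df].
move=> t t0; split; last exact: up.
rewrite ltNge; apply/negP => ft.
have tpos : 0 < t.
  rewrite lt_def t0 andbT; apply/eqP => e; rewrite e in ft; lra.
have cf0t : cont_on [set s | 0 <= s <= t] f.
  by apply: cont_on_sub cf => s /andP[].
have [u [/andP[u0 ut] fu H1]] := @first_ge _ (fun s => - f s) 0 t tpos
  (cont_on_opp cf0t) (ltac:(rewrite /=; lra)) (ltac:(rewrite /=; lra)).
set K := - kap + `|lam| * f 0 ^+ p.
set w := fun r => f r * expR (K * r).
have cw : cont_on [set s | 0 <= s] w.
  apply: cont_onM cf _ => x.
  apply: continuous_comp; last exact: continuous_expR.
  exact: mulrl_continuous.
have dw : forall r : R, 0 < r -> is_derive r 1 w
    (f r * (expR (K * r) * K) + expR (K * r) * (f r * (kap + lam * f r ^+ p))).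
  by move=> r r0; apply: is_deriveM1; [exact: df | exact: is_derive_expK].
have [xi /andP[xi0 xiu] E] := mvt0 (lexx 0) u0 cw dw.
have fxi : 0 < f xi by have := H1 xi; rewrite xiu ltW //=; lra.
have fxi2 : f xi <= f 0 by apply: up; lra.
have hK : 0 <= K + (kap + lam * f xi ^+ p).
  have h1 : f xi ^+ p <= f 0 ^+ p by apply: lerXn2r; rewrite ?nnegrE; lra.
  have h2 : - `|lam| <= lam by have := ler_norm (- lam); rewrite normrN; lra.
  have h3 : 0 <= f xi ^+ p by rewrite exprn_ge0 // ltW.
  have h4 : 0 <= `|lam| * (f 0 ^+ p - f xi ^+ p) by rewrite mulr_ge0 //; lra.
  have h5 : 0 <= f xi ^+ p * (lam + `|lam|) by rewrite mulr_ge0 //; lra.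
  rewrite /K; nra.
have : 0 <= w u - w 0.
  rewrite E; apply: mulr_ge0; last lra.
  rewrite (_ : _ + _ = expR (K * xi) * f xi * (K + (kap + lam * f xi ^+ p))); last ring.
  by rewrite !mulr_ge0 // ?expR_ge0 // ltW.
rewrite /w mulr0 expR0 mulr1.
have : f u * expR (K * u) <= 0 by rewrite mulr_le0_ge0 ?expR_ge0 //=; lra.
lra.
Qed.


Lemma is_derive_affine (a b r : R) : is_derive r 1 (fun r => a + b * r) b.
Proof.
have hl : is_derive r 1 (fun r : R => b * r) b.
  have := is_deriveZ b (is_derive_id r 1) => h.
  by apply: (@is_derive_eq _ _ _ _ _ _ _ _ h); rewrite /GRing.scale /= mulr1.
have := is_deriveD (is_derive_cst a r 1) hl => h.
by apply: (@is_derive_eq _ _ _ _ _ _ _ _ h); rewrite add0r.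
Qed.

Lemma sol_decay kap lam (p : nat) f : (0 < p)%N -> kap < 0 -> ode_sol kap lam p f ->
  0 < f 0 -> kap + lam * f 0 ^+ p < 0 ->
  exists2 d, 0 < d & forall t, 0 <= t -> f t * (1 + d * t) <= f 0.
Proof.
move=> p0 k0 hs f00 hy0.
have pos := sol_pos p0 k0 hs f00 hy0.
move: hs => [cf df].
have [d [d0 Hd]] : exists d, 0 < d /\ forall z, 0 <= z <= f 0 -> kap + lam * z ^+ p <= - d.
  case: (leP lam 0) => l0.
    exists (- kap); split; first lra.
    move=> z /andP[z0 _].
    have : lam * z ^+ p <= 0 by rewrite mulr_le0_ge0 // exprn_ge0.
    lra.
  exists (- (kap + lam * f 0 ^+ p)); split; first lra.
  move=> z /andP[z0 zy].
  have : z ^+ p <= f 0 ^+ p by apply: lerXn2r; rewrite ?nnegrE; lra.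
  nra.
exists d => // t t0.
case: (eqVneq t 0) => [->|tn0]; first by rewrite mulr0 addr0 mulr1.
have tpos : 0 < t by rewrite lt_def tn0 t0.
set W := fun r => f r * (1 + d * r).
have cW : cont_on [set s | 0 <= s] W.
  apply: cont_onM cf _ => x.
  apply: continuousD; first exact: cst_continuous.
  exact: mulrl_continuous.
have dW : forall r : R, 0 < r -> is_derive r 1 W
    (f r * d + (1 + d * r) * (f r * (kap + lam * f r ^+ p))).
  by move=> r r0; apply: is_deriveM1; [exact: df | exact: is_derive_affine].
have [xi /andP[xi0 xit] E] := mvt0 (lexx 0) tpos cW dW.
have [fxi fxi2] := pos xi (ltW xi0).
have hxi := Hd (f xi) (ltac:(apply/andP; split; lra)).
have : f xi * d + (1 + d * xi) * (f xi * (kap + lam * f xi ^+ p)) <= 0.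
  have h1 : (1 + d * xi) * (kap + lam * f xi ^+ p) <= (1 + d * xi) * (- d).
    by rewrite ler_wpM2l //; nra.
  have h2 : (1 + d * xi) * (kap + lam * f xi ^+ p) + d <= 0 by nra.
  rewrite (_ : _ + _ = f xi * ((1 + d * xi) * (kap + lam * f xi ^+ p) + d)); last ring.
  by rewrite pmulr_rle0.
move=> h; have : W t - W 0 <= 0 by rewrite E; nra.
by rewrite /W mulr0 addr0 mulr1; lra.
Qed.


Lemma sol_behavior_pos kap lam (p : nat) f : (0 < p)%N -> kap < 0 -> ode_sol kap lam p f ->
  0 < f 0 -> kap + lam * f 0 ^+ p < 0 ->
  (forall t, 0 <= t -> exists2 th, 0 <= th <= 1 & f t = th * f 0) /\
  f t @[t --> +oo] --> 0.
Proof.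
move=> p0 k0 hs f00 hy0.
have pos := sol_pos p0 k0 hs f00 hy0.
have [d d0 Hd] := sol_decay p0 k0 hs f00 hy0.
split.
  move=> t t0; have [ft1 ft2] := pos t t0; exists (f t / f 0); last by rewrite divfK // gt_eqF.
  apply/andP; split; first by rewrite divr_ge0 // ltW.
  by rewrite ler_pdivrMr // mul1r.
apply/cvgrPdist_lt => e e0.
exists (f 0 / (d * e)); split; first by rewrite num_real.
move=> t Mt.
have t0 : 0 <= t by apply: le_trans (ltW Mt); rewrite divr_ge0 ?ltW ?mulr_gt0.
have [ft1 ft2] := pos t t0.
have := Hd t t0.
move: Mt; rewrite ltr_pdivrMr ?mulr_gt0 // => Mt.
rewrite sub0r normrN gtr0_norm //.
move=> h; rewrite ltNge; apply/negP => fe.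
have : e * (1 + d * t) <= f t * (1 + d * t) by rewrite ler_wpM2r //; nra.
nra.
Qed.

Lemma sol_behavior kap lam (p : nat) f : (0 < p)%N -> kap < 0 -> ode_sol kap lam p f ->
  kap + lam * f 0 ^+ p < 0 ->
  (forall t, 0 <= t -> exists2 th, 0 <= th <= 1 & f t = th * f 0) /\
  f t @[t --> +oo] --> 0.
Proof.
move=> p0 k0 hs hy0.
case: (ltgtP (f 0) 0) => f0.
- have hs' := ode_sol_opp hs.
  have hy0' : kap + lam * (-1) ^+ p * (- f 0) ^+ p < 0.
    by rewrite -mulrA -exprMn mulN1r opprK.
  have [H1 H2] := sol_behavior_pos p0 k0 hs' (ltac:(rewrite /=; lra)) hy0'.
  split.
    move=> t t0; have [th th01 E] := H1 t t0; exists th => //.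
    by rewrite -[f t]opprK E mulrN opprK.
  apply/cvgrPdist_lt => e e0.
  move/cvgrPdist_lt: H2 => /(_ e e0); apply: filterS => t /=.
  by rewrite !sub0r !normrN.
- exact: sol_behavior_pos p0 k0 hs f0 hy0.
- have hb : kap + lam * 0 ^+ p < 0 by rewrite expr0n eqn0Ngt p0 /= mulr0 addr0.
  have z1 := sol_upper p0 k0 hs (lexx 0) hb (ltac:(rewrite f0; lra)).
  have hs' := ode_sol_opp hs.
  have hb' : kap + lam * (-1) ^+ p * 0 ^+ p < 0 by rewrite expr0n eqn0Ngt p0 /= mulr0 addr0.
  have z2 := sol_upper p0 k0 hs' (lexx 0) hb' (ltac:(rewrite /= f0; lra)).
  have z : forall t, 0 <= t -> f t = 0.
    by move=> t t0; have := z1 t t0; have := z2 t t0; rewrite /=; lra.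
  split.
    by move=> t t0; exists 0; [rewrite lexx ler01 | rewrite z // mul0r].
  apply/cvgrPdist_lt => e e0.
  exists 0; split => // t t0.
  by rewrite z ?ltW // subr0 normr0.
Qed.

End Sc.

Section Ex.
Context {R : realType}.

Lemma is_derive_scal (b t : R) (g : R -> R) dg : is_derive t 1 g dg ->
  is_derive t 1 (fun t => b * g t) (b * dg).
Proof.
move=> hg; have := is_deriveZ b hg => h.
exact: (@is_derive_eq _ _ _ _ _ _ _ _ h).
Qed.

Lemma is_derive_affc (c b t : R) (g : R -> R) dg : is_derive t 1 g dg ->
  is_derive t 1 (fun t => c + b * g t) (b * dg).
Proof.
move=> hg; have := is_deriveD (is_derive_cst c t 1) (is_derive_scal b hg) => h.
by apply: (@is_derive_eq _ _ _ _ _ _ _ _ h); rewrite add0r.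
Qed.

Definition solf (kap lam : R) (p : nat) (y0 : R) (t : R) : R :=
  y0 * expR (kap * t) *
  (1 + lam / kap * y0 ^+ p + (- (lam / kap * y0 ^+ p)) * expR (p%:R * kap * t)) `^ (- p%:R^-1).

Lemma solf0 kap lam p y0 : solf kap lam p y0 0 = y0.
Proof.
rewrite /solf !mulr0 expR0 !mulr1.
rewrite (_ : 1 + lam / kap * y0 ^+ p + - (lam / kap * y0 ^+ p) = 1); last by ring.
by rewrite powR1 mulr1.
Qed.

Lemma solf_derive kap lam (p : nat) y0 : (0 < p)%N -> kap < 0 -> kap + lam * y0 ^+ p < 0 ->
  forall t : R, 0 <= t -> is_derive t 1 (solf kap lam p y0)
    (solf kap lam p y0 t * (kap + lam * solf kap lam p y0 t ^+ p)).
Proof.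
move=> p0 k0 hy t t0.
pose a := lam / kap * y0 ^+ p.
pose K := p%:R * kap.
pose r := - (p%:R : R)^-1.
pose D := fun t => 1 + a + (- a) * expR (K * t).
have solfE : solf kap lam p y0 = fun t => y0 * expR (kap * t) * D t `^ r by [].
have pR0 : p%:R != 0 :> R by rewrite pnatr_eq0 -lt0n.
have Dpos : 0 < D t.
  have hE1 : expR (K * t) <= 1.
    by rewrite expR_le1 /K mulr_le0_ge0 // mulr_ge0_le0 ?ler0n ?ltW.
  have hE0 := expR_ge0 (K * t).
  have ha : 0 < 1 + a.
    have : kap * (1 + a) = kap + lam * y0 ^+ p.
      by rewrite /a; field; rewrite lt_eqF.
    nra.
  rewrite /D; case: (leP 0 a) => ha0; nra.
have hE := is_derive_expK K t.
have hD : is_derive t 1 D (- a * (expR (K * t) * K)).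
  have := is_derive_affc (1 + a) (- a) hE => h.
  exact: (@is_derive_eq _ _ _ _ _ _ _ _ h).
have hq : is_derive t 1 (fun t => D t `^ r) (r * D t `^ (r - 1) * (- a * (expR (K * t) * K))).
  have := is_derive_comp1 hD (is_derive1_powR r Dpos) => h.
  exact: (@is_derive_eq _ _ _ _ _ _ _ _ h).
have he : is_derive t 1 (fun t => y0 * expR (kap * t)) (y0 * (expR (kap * t) * kap)).
  exact: is_derive_scal (is_derive_expK kap t).
have := is_deriveM1 he hq => h.
rewrite solfE; apply: (@is_derive_eq _ _ _ _ _ _ _ _ h).
have Dn0 : D t != 0 by rewrite gt_eqF.
have -> : D t `^ (r - 1) = D t `^ r / D t.
  by rewrite powRD ?Dn0 ?implybT // powR_inv1 // ltW.
have hqp : (D t `^ r) ^+ p = (D t)^-1.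
  rewrite -powR_mulrn ?powR_ge0 // -powRrM /r mulNr mulVf //.
  by rewrite powR_inv1 // ltW.
have hep : expR (kap * t) ^+ p = expR (K * t).
  by rewrite -expRM_natl /K mulrA.
rewrite !exprMn hqp hep.
rewrite /a /K /r; move: Dn0 (lt_eqF k0) pR0.
generalize (D t `^ (- (p%:R : R)^-1)) (D t) (expR (kap * t)) (expR (p%:R * kap * t)).
move=> q d e E dn0 kn0 pn0.
by field; rewrite dn0 kn0 pn0.
Qed.
End Ex.


Section Vec.
Context {R : realType} {n : nat}.
Implicit Types (u x : 'cV[R]_n).

Lemma sum_scale_entry (c : 'I_n -> R) (w : 'I_n -> 'cV[R]_n) i j :
  (\sum_s c s *: w s) i j = \sum_s c s * w s i j.
Proof. by rewrite summxE; apply: eq_bigr => s _; rewrite mxE. Qed.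

Lemma dotv_sum u (c : 'I_n -> R) (w : 'I_n -> 'cV[R]_n) :
  dotv u (\sum_s c s *: w s) = \sum_s c s * dotv u (w s).
Proof.
rewrite /dotv.
under eq_bigr do rewrite sum_scale_entry mulr_sumr.
rewrite exchange_big /=; apply: eq_bigr => s _.
by rewrite mulr_sumr; apply: eq_bigr => i _; ring.
Qed.

Lemma dotv_orth (v : 'I_n -> 'cV[R]_n) (hv : forall r s, dotv (v r) (v s) = (r == s)%:R)
  (c : 'I_n -> R) r : dotv (v r) (\sum_s c s *: v s) = c r.
Proof.
rewrite dotv_sum (bigD1 r) //= hv eqxx mulr1 big1 ?addr0 // => s sr.
by rewrite hv eq_sym (negPf sr) mulr0.
Qed.

Lemma complete (v : 'I_n -> 'cV[R]_n) (hv : forall r s, dotv (v r) (v s) = (r == s)%:R) x :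
  x = \sum_s dotv (v s) x *: v s.
Proof.
pose V : 'M[R]_n := \matrix_(i, j) v j i 0.
have h1 : V^T *m V = 1%:M.
  apply/matrixP => r s; rewrite !mxE -hv /dotv.
  by apply: eq_bigr => i _; rewrite !mxE.
have h2 := mulmx1C h1.
apply/matrixP => i j; rewrite sum_scale_entry.
rewrite (ord1 j).
have -> : x i 0 = \sum_l (1%:M : 'M[R]_n) i l * x l 0.
  by rewrite (bigD1 i) //= big1 ?addr0 ?mxE ?eqxx ?mul1r // => l li; rewrite mxE eq_sym (negPf li) mul0r.
rewrite -h2.
under eq_bigr do rewrite mxE mulr_suml.
rewrite exchange_big /=; apply: eq_bigr => s _.
rewrite /dotv mulr_suml; apply: eq_bigr => l _; rewrite !mxE; ring.
Qed.


Lemma sum_scale_mx_entry m1 m2 (c : 'I_n -> R) (w : 'I_n -> 'M[R]_(m1, m2)) i j :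
  (\sum_s c s *: w s) i j = \sum_s c s * w s i j.
Proof. by rewrite summxE; apply: eq_bigr => s _; rewrite mxE. Qed.

Lemma Kmat_mul (kap : 'I_n -> R) (v : 'I_n -> 'cV[R]_n) x :
  Kmat kap v *m x = \sum_s (kap s * dotv (v s) x) *: v s.
Proof.
apply/matrixP => i j; rewrite (ord1 j) sum_scale_entry /Kmat !mxE.
under eq_bigr do rewrite sum_scale_mx_entry mulr_suml.
rewrite exchange_big /=; apply: eq_bigr => s _.
rewrite /dotv mulr_sumr mulr_suml; apply: eq_bigr => l _.
rewrite mxE big_ord1 !mxE; ring.
Qed.

End Vec.

Section Tens.
Context {R : realType} {n k : nat}.

Lemma tapply_odeco (lam : 'I_n -> R) (v : 'I_n -> 'cV[R]_n) (x : 'cV[R]_n) :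
  tapply (@odeco_tensor R n k.+1 lam v) x = \sum_s (lam s * dotv (v s) x ^+ k) *: v s.
Proof.
apply/matrixP => i j; rewrite (ord1 j) sum_scale_entry !mxE.
rewrite big_mkcond /=.
pose G (r : 'I_n) (j : 'I_k.+1) (m : 'I_n) : R :=
  if val j == 0%N then (m == i)%:R * v r m 0 else v r m 0 * x m 0.
have key : forall (idx : {ffun 'I_k.+1 -> 'I_n}),
  (if [forall j0 : 'I_k.+1, (val j0 == 0%N) ==> (idx j0 == i)] then
     @odeco_tensor R n k.+1 lam v idx * \prod_(j0 < k.+1 | val j0 != 0%N) x (idx j0) 0 else 0)
  = \sum_r lam r * \prod_j0 G r j0 (idx j0).
  move=> idx.
  have Pe : [forall j0 : 'I_k.+1, (val j0 == 0%N) ==> (idx j0 == i)] = (idx ord0 == i).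
    apply/forallP/idP => [/(_ ord0) //| h j0]; apply/implyP => /eqP j00.
    by have -> : j0 = ord0 by apply/val_inj.
  rewrite Pe; case: (eqVneq (idx ord0) i) => hi; last first.
    rewrite big1 // => r _; rewrite big_ord_recl /G /= (negPf hi) !mul0r mulr0 //.
  rewrite /odeco_tensor mulr_suml; apply: eq_bigr => r _.
  rewrite /tpow big_ord_recl [X in _ = _ * X]big_ord_recl /G /= hi eqxx mul1r.
  rewrite [\prod_(j0 < k.+1 | _) _]big_mkcond big_ord_recl /= mul1r big_split /=.
  rewrite [X in _ * X = _](_ : _ = \prod_(i0 < k) x (idx (lift ord0 i0)) 0); last first.
    by apply: eq_bigr.
  ring.
under eq_bigr do rewrite key.
rewrite exchange_big /=; apply: eq_bigr => r _.
rewrite -mulr_sumr -(bigA_distr_bigA (fun j0 m => G r j0 m)) /= big_ord_recl /G /=.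
rewrite (bigD1 i) //= eqxx mul1r big1 ?addr0; last first.
  by move=> m mi; rewrite (negPf mi) mul0r.
rewrite prodr_const card_ord /dotv; ring.
Qed.

End Tens.


Section Mx.
Context {R : realType}.

Lemma is_derive_mx_entries m1 m2 (M : R -> 'M[R]_(m1, m2)) (t : R) (D : 'M[R]_(m1, m2)) :
  (forall i j, is_derive t 1 (fun s => M s i j) (D i j)) -> is_derive t 1 M D.
Proof.
move=> hd.
have dM : derivable M t 1.
  by apply/derivable_mxP => i j; exact: (@ex_derive _ _ _ _ _ _ _ (hd i j)).
apply: DeriveDef => //; rewrite derive_mx //.
by apply/matrixP => i j; rewrite mxE (@derive_val _ _ _ _ _ _ _ (hd i j)).
Qed.

Lemma is_derive_entry m1 m2 (M : R -> 'M[R]_(m1, m2)) (t : R) (D : 'M[R]_(m1, m2)) i j :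
  is_derive t 1 M D -> is_derive t 1 (fun s => M s i j) (D i j).
Proof.
move=> hM.
have dM := @ex_derive _ _ _ _ _ _ _ hM.
have dij : derivable (fun s => M s i j) t 1 by move/derivable_mxP: dM; apply.
apply: DeriveDef => //.
have := derive_mx dM; rewrite (@derive_val _ _ _ _ _ _ _ hM) => ->.
by rewrite mxE.
Qed.

Lemma is_derive_sumf m (h : 'I_m -> R -> R) (t : R) (dh : 'I_m -> R) :
  (forall i, is_derive t 1 (h i) (dh i)) ->
  is_derive t 1 (fun s => \sum_i h i s) (\sum_i dh i).
Proof.
move=> hd; have := is_derive_sum hd; rewrite fct_sumE => H.
exact: (@is_derive_eq _ _ _ _ _ _ _ _ H).
Qed.

Lemma continuous_sumf (T : topologicalType) m (h : 'I_m -> T -> R) :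
  (forall i, continuous (h i)) -> continuous (fun x => \sum_i h i x).
Proof.
elim: m h => [|m IH] h hc.
  rewrite (_ : (fun x => _) = fun=> 0); first exact: cst_continuous.
  by apply/funext => x; rewrite big_ord0.
rewrite (_ : (fun x => _) = (fun x => \sum_(i < m) h (widen_ord (leqnSn m) i) x) + h ord_max).
  move=> x; apply: continuousD; last exact: hc.
  by apply: IH => i; exact: hc.
by apply/funext => x; rewrite big_ord_recr.
Qed.

Lemma cvg_sumf (V : normedModType R) m (h : 'I_m -> R -> V) :
  (forall i, h i t @[t --> +oo] --> 0) -> (\sum_i h i t) @[t --> +oo] --> (0 : V).
Proof.
elim: m h => [|m IH] h hc.
  rewrite (_ : (fun t => _) = fun=> 0); first exact: cvg_cst.
  by apply/funext => x; rewrite big_ord0.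
rewrite (_ : (fun t => _) = (fun t => \sum_(i < m) h (widen_ord (leqnSn m) i) t) + (fun t => h ord_max t)).
  rewrite -[X in _ --> X]addr0; apply: cvgD; last exact: hc.
  by apply: IH => i; exact: hc.
by apply/funext => x; rewrite big_ord_recr.
Qed.

End Mx.

Section Main.
Context {R : realType}.

Lemma vfield_form n p (kap lam : 'I_n -> R) (v : 'I_n -> 'cV[R]_n) (x : 'cV[R]_n) :
  vfield p.+2 kap lam v x =
  \sum_s (kap s * dotv (v s) x + lam s * dotv (v s) x ^+ p.+1) *: v s.
Proof.
rewrite /vfield Kmat_mul tapply_odeco -big_split /=.
by apply: eq_bigr => s _; rewrite scalerDl.
Qed.

Lemma dotv_continuous n (u : 'cV[R]_n) : continuous (dotv u).
Proof.
have := @continuous_sumf _ 'cV[R]_n n (fun i (M : 'cV[R]_n) => u i 0 * M i 0).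
apply.
move=> i M; apply: continuousM; first exact: cst_continuous.
exact: coord_continuous.
Qed.

Lemma main_generic n (p : nat) (v : 'I_n -> 'cV[R]_n)
  (hv : forall r s : 'I_n, dotv (v r) (v s) = (r == s)%:R)
  (lam kap : 'I_n -> R) (hkap : forall r, kap r < 0) (p0 : (0 < p)%N)
  (S : 'cV[R]_n -> Prop)
  (Sa : forall x0, S x0 -> forall r, kap r + lam r * dotv (v r) x0 ^+ p < 0)
  (Sb : forall x0 x, S x0 ->
     (forall r, exists2 th, 0 <= th <= 1 & dotv (v r) x = th * dotv (v r) x0) -> S x) :
  stable_region (vfield p.+2 kap lam v) S.
Proof.
move=> x0 Sx0.
have ha := Sa x0 Sx0.
split.
  pose phi r := solf (kap r) (lam r) p (dotv (v r) x0).
  pose x := fun t => \sum_r phi r t *: v r.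
  have dphi : forall r (t : R), 0 <= t ->
      is_derive t 1 (phi r) (phi r t * (kap r + lam r * phi r t ^+ p)).
    by move=> r t t0; apply: solf_derive.
  have dotx : forall s t, dotv (v s) (x t) = phi s t by move=> s t; apply: dotv_orth.
  have dx : forall t : R, 0 <= t -> is_derive t 1 x (vfield p.+2 kap lam v (x t)).
    move=> t t0; apply: is_derive_mx_entries => i j.
    rewrite vfield_form sum_scale_mx_entry.
    under eq_bigr do rewrite dotx.
    rewrite (_ : (fun s => x s i j) = fun s => \sum_r v r i j * phi r s); last first.
      by apply/funext => s; rewrite /x sum_scale_mx_entry; apply: eq_bigr => r _; rewrite mulrC.
    have := is_derive_sumf (fun r => is_derive_scal (v r i j) (dphi r t t0)) => H.
    apply: (@is_derive_eq _ _ _ _ _ _ _ _ H).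
    by apply: eq_bigr => r _; rewrite exprS; ring.
  exists x; split; [|split].
  - rewrite /x; under eq_bigr do rewrite /phi solf0.
    exact: (esym (complete hv x0)).
  - apply: derivable_within_continuous => t; rewrite in_itv /= andbT => t0.
    exact: (@ex_derive _ _ _ _ _ _ _ (dx t t0)).
  - by move=> t t0; apply: dx; rewrite ltW.
move=> x [x00 [cx dx]].
pose y r t := dotv (v r) (x t).
have ys : forall r, ode_sol (kap r) (lam r) p (y r).
  move=> r; split.
    have H := within_cont_on (@within_continuous_comp _ _ _ _ x (dotv (v r))
      (fun M _ => @dotv_continuous n (v r) M) cx).
    apply: (cont_on_sub _ H) => t /= t0; by rewrite in_itv /= andbT.
  move=> t t0; have H := dx t t0.
  have := is_derive_sumf (fun i => is_derive_scal (v r i 0) (is_derive_entry i 0 H)) => H2.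
  apply: (@is_derive_eq _ _ _ _ _ _ _ _ H2).
  rewrite -/(dotv (v r) _) vfield_form dotv_orth //.
  by rewrite exprS /y; ring.
have y0 : forall r, y r 0 = dotv (v r) x0 by move=> r; rewrite /y x00.
have beh : forall r, (forall t, 0 <= t -> exists2 th, 0 <= th <= 1 & y r t = th * y r 0) /\
    y r t @[t --> +oo] --> 0.
  move=> r; apply: (sol_behavior p0 (hkap r) (ys r)).
  by rewrite /y x00; apply: ha.
split.
  rewrite (_ : x = fun t => \sum_r y r t *: v r); last by apply/funext => t; exact: complete.
  apply: cvg_sumf => r.
  have := cvgZ (beh r).2 (cvg_cst (v r)); rewrite scale0r; exact.
move=> t t0; apply: (Sb x0 (x t) Sx0) => r.
have [th th01 E] := (beh r).1 t t0; exists th => //.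
by rewrite -/(y r t) E y0.
Qed.

End Main.

Section Region.
Context {R : realType}.

Lemma cthr_pos (p : nat) (kap lam : R) : (0 < p)%N -> kap < 0 -> 0 < lam ->
  0 < cthr p kap lam /\ cthr p kap lam ^+ p = - kap / lam.
Proof.
move=> p0 k0 l0; rewrite /cthr l0.
have q0 : 0 < - kap / lam by rewrite divr_gt0 //; lra.
by split; [apply: powR_gt0 | apply: powR_root => //; apply: ltW].
Qed.

Lemma cthr_neg (p : nat) (kap lam : R) : (0 < p)%N -> kap < 0 -> lam < 0 ->
  0 < - cthr p kap lam /\ (- cthr p kap lam) ^+ p = kap / lam.
Proof.
move=> p0 k0 l0; rewrite /cthr.
have -> : (0 < lam) = false by apply/negbTE; rewrite -leNgt ltW.
rewrite opprK.
have q0 : 0 < kap / lam.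
  have : 0 < (- kap) / (- lam) by rewrite divr_gt0 //; lra.
  by rewrite invrN mulrNN.
by split; [apply: powR_gt0 | apply: powR_root => //; apply: ltW].
Qed.

Lemma oddX_opp (p : nat) (x : R) : odd p -> (- x) ^+ p = - x ^+ p.
Proof. by move=> hp; rewrite exprNn -signr_odd hp expr1 mulN1r. Qed.

Lemma oddX_le0 (p : nat) (x : R) : odd p -> x <= 0 -> x ^+ p <= 0.
Proof.
move=> hp x0; have : 0 <= (- x) ^+ p by rewrite exprn_ge0 // oppr_ge0.
by rewrite oddX_opp // oppr_ge0.
Qed.

Lemma even_a (p : nat) (kap lam y : R) : ~~ odd p -> (0 < p)%N -> kap < 0 ->
  (0 < lam -> `|y| < cthr p kap lam) -> kap + lam * y ^+ p < 0.
Proof.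
move=> hp p0 k0 hy.
have yp : y ^+ p = `|y| ^+ p.
  by rewrite -normrX ger0_norm // exprn_even_ge0.
case: (ltP 0 lam) => l0; last first.
  have : lam * y ^+ p <= 0 by rewrite mulr_le0_ge0 // exprn_even_ge0.
  lra.
have [c0 cp] := cthr_pos p0 k0 l0.
have pn0 : (p != 0)%N by rewrite -lt0n.
have : `|y| ^+ p < cthr p kap lam ^+ p by rewrite ltrXn2r // hy.
rewrite cp yp -(ltr_pM2l l0) mulrCA mulfV ?gt_eqF // mulr1.
lra.
Qed.

Lemma even_b (p : nat) (kap lam y0 th : R) :
  (0 < lam -> `|y0| < cthr p kap lam) -> 0 <= th <= 1 ->
  (0 < lam -> `|th * y0| < cthr p kap lam).
Proof.
move=> hy /andP[t0 t1] l0; have := hy l0.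
rewrite normrM (ger0_norm t0) => h.
have : th * `|y0| <= `|y0| by rewrite ler_piMl.
lra.
Qed.

Lemma odd_a (p : nat) (kap lam y : R) : odd p -> (0 < p)%N -> kap < 0 ->
  (0 < lam -> y < cthr p kap lam) -> (lam < 0 -> cthr p kap lam < y) ->
  kap + lam * y ^+ p < 0.
Proof.
move=> hp p0 k0 h1 h2.
case: (ltgtP lam 0) => l0.
- have [c0 cp] := cthr_neg p0 k0 l0.
  have cy := h2 l0.
  case: (leP 0 y) => y0.
    have : lam * y ^+ p <= 0 by rewrite mulr_le0_ge0 ?exprn_ge0 // ltW.
    lra.
  have : (- y) ^+ p < (- cthr p kap lam) ^+ p by rewrite ltrXn2r -?lt0n //; lra.
  rewrite cp oddX_opp // => h.
  have : lam * (kap / lam) = kap by rewrite mulrCA mulfV ?lt_eqF // mulr1.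
  nra.
- have [c0 cp] := cthr_pos p0 k0 l0.
  have cy := h1 l0.
  case: (leP y 0) => y0.
    have : lam * y ^+ p <= 0 by rewrite mulr_ge0_le0 ?oddX_le0 // ltW.
    lra.
  have : y ^+ p < cthr p kap lam ^+ p by rewrite ltrXn2r -?lt0n //; lra.
  rewrite cp => h.
  have : lam * (- kap / lam) = - kap by rewrite mulrCA mulfV ?gt_eqF // mulr1.
  nra.
- by rewrite l0 mul0r addr0.
Qed.

Lemma odd_b (p : nat) (kap lam y0 th : R) : (0 < p)%N -> kap < 0 ->
  (0 < lam -> y0 < cthr p kap lam) -> (lam < 0 -> cthr p kap lam < y0) ->
  0 <= th <= 1 ->
  (0 < lam -> th * y0 < cthr p kap lam) /\ (lam < 0 -> cthr p kap lam < th * y0).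
Proof.
move=> p0 k0 h1 h2 /andP[t0 t1]; split => l0.
  have [c0 _] := cthr_pos p0 k0 l0; have := h1 l0.
  case: (leP y0 0) => y00; nra.
have [c0 _] := cthr_neg p0 k0 l0; have := h2 l0.
case: (leP y0 0) => y00; nra.
Qed.

End Region.

Theorem theorem2 (R : realType) (n k : nat) (hn : (1 <= n)%N) (hk : (3 <= k)%N)
  (v : 'I_n -> 'cV[R]_n)
  (hv : forall r s : 'I_n, dotv (v r) (v s) = (r == s)%:R)
  (lam kap : 'I_n -> R) (hkap : forall r, kap r < 0) :
  let p := (k - 2)%N in
  let F := vfield k kap lam v in
  (~~ odd p -> stable_region F (Reven p kap lam v)) /\
  (odd p -> stable_region F (Rodd p kap lam v)).
Proof.
move: hk; case: k => [|[|[|k']]] // _ p F.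
have pE : p = k'.+1 by rewrite /p !subSS subn0.
rewrite /F pE; split => hp.
  apply: main_generic => //.
  - by move=> x0 Sx0 r; apply: even_a => //; apply: Sx0.
  - move=> x0 x Sx0 H r l0; have [th th01 ->] := H r.
    exact: (even_b (Sx0 r) th01 l0).
apply: main_generic => //.
- by move=> x0 Sx0 r; have [h1 h2] := Sx0 r; apply: odd_a.
- move=> x0 x Sx0 H r; have [th th01 ->] := H r.
  have [h1 h2] := Sx0 r.
  exact: (odd_b _ (hkap r) h1 h2 th01).
Qed.
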